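(* Let $n,k\geq 1$ be integers and let $r\in\{1,2,3,\dots\}\cup\{\infty\}$. Let $\pi^n_k\colon F(\mathbb{R}^n,k)\to B(\mathbb{R}^n,k)$ be the quotient map, and let $B(\mathbb{R}^n,k)\hookrightarrow B(\mathbb{R}^{n+r},k)$ be the map induced by the standard inclusion $\mathbb{R}^n\cong\mathbb{R}^n\times\{0\}\subset\mathbb{R}^{n+r}$. Then $$\mathrm{secat}(\pi^n_k)=\mathrm{cat}\big(B(\mathbb{R}^n,k)\hookrightarrow B(\mathbb{R}^{n+r},k)\big)=\mathrm{cat}_{B(\mathbb{R}^{n+r},k)}B(\mathbb{R}^n,k).$$
   Context: For a space $M$, the ordered configuration space is $F(M,k)=\{(x_1,\dots,x_k)\in M^k : x_i\neq x_j \text{ for } i\neq j\}$, and the unordered configuration space is $B(M,k)=F(M,k)/\Sigma_k$, the quotient by the free permuting action of the symmetric group $\Sigma_k$; $\pi^n_k\colon F(\mathbb{R}^n,k)\to B(\mathbb{R}^n,k)$ is the quotient covering. $\mathbb{R}^\infty=\bigcup_n\mathbb{R}^n$ with the colimit topology, and $F(\mathbb{R}^\infty,k)$, $B(\mathbb{R}^\infty,k)$ are the corresponding colimits. The sectional category $\mathrm{secat}(p)$ of a fibration $p\colon E\to B$ is the least integer $m$ such that $B$ can be covered by $m+1$ open sets each admitting a local section of $p$. The category $\mathrm{cat}(f)$ of a map $f\colon A\to B$ is the least integer $m$ such that $A$ can be covered by $m+1$ open sets on each of which the restriction of $f$ is nullhomotopic. For $A\subset B$, the subspace category $\mathrm{cat}_B(A)$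 is the least $m$ such that $A$ can be covered by $m+1$ subsets of $B$, each open in $B$ and contractible in $B$ (i.e., its inclusion into $B$ is nullhomotopic). *)

(* Defs.v *)
From Stdlib Require Import Reals.
From mathcomp Require Import all_boot all_fingroup.


(* Points of R^N, N <= infinity, are sequences nat -> R.
   R^m  = sequences vanishing from index m on (so R^m = R^m x {0} inside R^{m+r});
   R^oo = finitely supported sequences (= union of the R^m). *)
Definition Rpt := nat -> R.

(* A dimension: Some m = R^m, None = R^infinity. *)
Definition dim := option nat.

Definition inR (d : dim) (x : Rpt) : Prop :=
  match d with
  | Some m => forall i, (m <= i)%N -> x i = R0
  | None => exists m, forall i, (m <= i)%N -> x i = R0
  end.

Definition Conf (k : nat) := 'I_k -> Rpt.

Definition inF (k : nat) (d : dim) (c : Conf k) : Prop :=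
  (forall i, inR d (c i)) /\ (forall i j, i <> j -> c i <> c j).

(* sup-metric neighbourhood in (R^m)^k (product of Euclidean topologies). *)
Definition near_fin (k m : nat) (c : Conf k) (eps : R) (c' : Conf k) : Prop :=
  forall (i : 'I_k) j, (j < m)%N -> Rlt (Rabs (Rminus (c' i j) (c i j))) eps.

Definition openF_fin (k m : nat) (U : Conf k -> Prop) : Prop :=
  (forall c, U c -> inF k (Some m) c) /\
  (forall c, U c -> exists eps, Rlt R0 eps /\
     forall c', inF k (Some m) c' -> near_fin k m c eps c' -> U c').

(* Open subsets of F(R^d, k); for d = infinity: colimit topology of the F(R^m,k). *)
Definition openF (k : nat) (d : dim) (U : Conf k -> Prop) : Prop :=
  match d with
  | Some m => openF_fin k m U
  | None => (forall c, U c -> inF k None c) /\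
            (forall m, openF_fin k m (fun c => U c /\ inF k (Some m) c))
  end.

Definition act (k : nat) (s : {perm 'I_k}) (c : Conf k) : Conf k :=
  fun i => c (s i).

Definition invariant (k : nat) (U : Conf k -> Prop) : Prop :=
  forall s c, U c -> U (act k s c).

(* Subsets of B(R^d,k) are represented by their (Sigma_k-invariant) preimages
   in F(R^d,k); such a set is open in B(R^d,k) (quotient topology) iff the
   preimage is open in F(R^d,k). *)
Definition openB (k : nat) (d : dim) (U : Conf k -> Prop) : Prop :=
  openF k d U /\ invariant k U.

Definition sameB (k : nat) (c c' : Conf k) : Prop :=
  exists s : {perm 'I_k}, c' = act k s c.

Definition inI (t : R) : Prop := Rle R0 t /\ Rle t R1.

(* H : U x I -> B(R^e,k), with U an (invariant) subset of B(R^d,k) carrying the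
   subspace topology, U x I the product topology (basic opens V x J with V open
   in B(R^d,k), J an open interval).  H is given on representatives. *)
Definition homotopyB (k : nat) (d e : dim) (U : Conf k -> Prop)
    (H : Conf k -> R -> Conf k) : Prop :=
  (forall c t, U c -> inI t -> inF k e (H c t)) /\
  (forall s c t, U c -> inI t -> sameB k (H c t) (H (act k s c) t)) /\
  (forall O, openB k e O ->
     forall c t, U c -> inI t -> O (H c t) ->
       exists V eps, openB k d V /\ V c /\ Rlt R0 eps /\
         forall c' t', V c' -> U c' -> inI t' -> Rlt (Rabs (Rminus t' t)) eps ->
           O (H c' t')).

Definition incl_nullhomotopic (k : nat) (d e : dim) (U : Conf k -> Prop) : Prop :=
  exists (H : Conf k -> R -> Conf k) (b0 : Conf k),
    inF k e b0 /\ homotopyB k d e U H /\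
    (forall c, U c -> sameB k c (H c R0)) /\
    (forall c, U c -> sameB k b0 (H c R1)).

Definition local_section (k n : nat) (U : Conf k -> Prop) (s : Conf k -> Conf k) : Prop :=
  (forall c, U c -> inF k (Some n) (s c)) /\
  (forall c, U c -> sameB k c (s c)) /\
  (forall p c, U c -> s (act k p c) = s c) /\
  (forall O, openF k (Some n) O -> forall c, U c -> O (s c) ->
     exists V, openB k (Some n) V /\ V c /\ forall c', V c' -> U c' -> O (s c')).

Definition secat_le (k n m : nat) : Prop :=
  exists U : nat -> Conf k -> Prop,
    (forall i, (i <= m)%N -> openB k (Some n) (U i) /\ exists s, local_section k n (U i) s) /\
    (forall c, inF k (Some n) c -> exists i, (i <= m)%N /\ U i c).

Definition cat_incl_le (k n : nat) (e : dim) (m : nat) : Prop :=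
  exists U : nat -> Conf k -> Prop,
    (forall i, (i <= m)%N -> openB k (Some n) (U i) /\ incl_nullhomotopic k (Some n) e (U i)) /\
    (forall c, inF k (Some n) c -> exists i, (i <= m)%N /\ U i c).

Definition catB_le (k n : nat) (e : dim) (m : nat) : Prop :=
  exists U : nat -> Conf k -> Prop,
    (forall i, (i <= m)%N -> openB k e (U i) /\ incl_nullhomotopic k e e (U i)) /\
    (forall c, inF k (Some n) c -> exists i, (i <= m)%N /\ U i c).

(* m is the least natural number satisfying P (no such m: the invariant is infinite). *)
Definition is_least (P : nat -> Prop) (m : nat) : Prop :=
  P m /\ forall m', P m' -> (m <= m')%N.

Definition tdim (n : nat) (r : option nat) : dim :=
  match r with Some r' => Some (n + r')%N | None => None end.

(* Main.v *)
Require Import Defs.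
From Stdlib Require Import Reals Lra ClassicalEpsilon FunctionalExtensionality Classical.
From mathcomp Require Import all_boot all_fingroup.
Open Scope R_scope.


Definition dle (u v : Rpt) (d : R) := forall x, Rabs (u x - v x) <= d.
Definition dlt (u v : Rpt) (d : R) := exists d', d' < d /\ dle u v d'.
Definition nearC (k : nat) (y w : Conf k) (d : R) := forall a, dlt (y a) (w a) d.
Definition sep (k : nat) (y : Conf k) (s : R) :=
  forall a b, a <> b -> exists x, s <= Rabs (y a x - y b x).

Lemma dlt_sym u v d : dlt u v d -> dlt v u d.
Proof. intros [d' [H1 H2]]; exists d'; split; auto; intro x;
  rewrite Rabs_minus_sym; apply H2. Qed.

Lemma dlt_trans u v w d1 d2 : dlt u v d1 -> dlt v w d2 -> dlt u w (d1 + d2).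
Proof.
  intros [e1 [H1 H2]] [e2 [H3 H4]]; exists (e1 + e2); split; [lra|].
  intro x; specialize (H2 x); specialize (H4 x).
  replace (u x - w x) with ((u x - v x) + (v x - w x)) by ring.
  eapply Rle_trans; [apply Rabs_triang| lra].
Qed.

Lemma dlt_mono u v d d' : dlt u v d -> d <= d' -> dlt u v d'.
Proof. intros [e [H1 H2]] H; exists e; split; auto; lra. Qed.

Lemma dlt_pos u v d : dlt u v d -> 0 < d.
Proof. intros [e [H1 H2]]; specialize (H2 O); pose proof (Rabs_pos (u O - v O)); lra. Qed.

Lemma dlt_coord u v d x : dlt u v d -> Rabs (u x - v x) < d.
Proof. intros [e [H1 H2]]; specialize (H2 x); lra. Qed.

Lemma dlt_refl u d : 0 < d -> dlt u u d.
Proof. intro H; exists 0; split; auto; intro x; rewrite Rminus_diag Rabs_R0; lra. Qed.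

Lemma nearC_sym k y w d : nearC k y w d -> nearC k w y d.
Proof. intros H a; apply dlt_sym, H. Qed.
Lemma nearC_trans k y w z d1 d2 : nearC k y w d1 -> nearC k w z d2 -> nearC k y z (d1 + d2).
Proof. intros H1 H2 a; eapply dlt_trans; eauto. Qed.
Lemma nearC_mono k y w d d' : nearC k y w d -> d <= d' -> nearC k y w d'.
Proof. intros H1 H2 a; eapply dlt_mono; eauto. Qed.
Lemma nearC_refl k y d : 0 < d -> nearC k y y d.
Proof. intros H a; apply dlt_refl; auto. Qed.

Lemma sep_core k (y : Conf k) s a b z d1 d2 :
  sep k y s -> dlt (y a) z d1 -> dlt (y b) z d2 -> d1 + d2 <= s -> a = b.
Proof.
  intros Hs H1 H2 Hd. destruct (classic (a = b)) as [|Hn]; auto.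
  destruct (Hs a b Hn) as [x Hx].
  pose proof (dlt_coord _ _ _ x (dlt_trans _ _ _ _ _ H1 (dlt_sym _ _ _ H2))). lra.
Qed.

Lemma fin_min (T : finType) (P : T -> R -> Prop) :
  (forall x, exists s, 0 < s /\ P x s) ->
  (forall x s s', P x s -> 0 < s' <= s -> P x s') ->
  exists s, 0 < s /\ forall x, P x s.
Proof.
  intros H Hm.
  assert (forall l : seq T, exists s, 0 < s /\ forall x, x \in l -> P x s).
  { elim=> [|y l [s [Hs IH]]].
    - exists 1; split; [lra| intros x Hx; by rewrite in_nil in Hx].
    - destruct (H y) as [s' [Hs' Hy]].
      exists (Rmin s s'); split; [apply Rmin_pos; auto|].
      intros x; rewrite in_cons => /orP [/eqP ->|Hx].
      + eapply Hm; eauto; split; [apply Rmin_pos; auto| apply Rmin_r].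
      + eapply Hm; eauto; split; [apply Rmin_pos; auto| apply Rmin_l]. }
  destruct (H0 (enum T)) as [s [Hs Hl]]; exists s; split; auto.
  intro x; apply Hl; by rewrite mem_enum.
Qed.

Lemma fin_max_nat (f : nat -> R) d M :
  (forall x, (x < M)%N -> f x < d) -> exists d', d' < d /\ forall x, (x < M)%N -> f x <= d'.
Proof.
  induction M as [|M IH]; intros H.
  - exists (d - 1); split; [lra| intros x Hx; inversion Hx].
  - destruct IH as [d' [H1 H2]].
    + intros x Hx; apply H; apply (ltn_trans Hx); auto.
    + exists (Rmax d' (f M)); split.
      * apply Rmax_lub_lt; auto; apply H; auto.
      * intros x Hx. rewrite ltnS leq_eqVlt in Hx. case/orP: Hx => [/eqP ->|Hx].
        apply Rmax_r. eapply Rle_trans; [apply H2; auto| apply Rmax_l].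
Qed.

Lemma fin_max_fin (T : finType) (f : T -> R) d :
  (forall x, f x < d) -> exists d', d' < d /\ forall x, f x <= d'.
Proof.
  intros H.
  assert (forall l : seq T, exists d', d' < d /\ forall x, x \in l -> f x <= d').
  { elim=> [|y l [d' [H1 H2]]].
    - exists (d - 1); split; [lra| intros x Hx; by rewrite in_nil in Hx].
    - exists (Rmax d' (f y)); split; [apply Rmax_lub_lt; auto|].
      intros x; rewrite in_cons => /orP [/eqP ->|Hx]; [apply Rmax_r|].
      eapply Rle_trans; [apply H2; auto| apply Rmax_l]. }
  destruct (H0 (enum T)) as [d' [H1 H2]]; exists d'; split; auto.
  intro x; apply H2; by rewrite mem_enum.
Qed.

Lemma dlt_of_fin (u v : Rpt) M d :
  (forall x, (M <= x)%N -> u x = v x) -> 0 < d ->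
  (forall x, (x < M)%N -> Rabs (u x - v x) < d) -> dlt u v d.
Proof.
  intros Hz Hd H. destruct (fin_max_nat (fun x => Rabs (u x - v x)) d M H) as [d' [H1 H2]].
  exists (Rmax d' 0); split; [apply Rmax_lub_lt; auto|].
  intro x. destruct (leqP M x) as [Hx|Hx].
  - rewrite (Hz x Hx) Rminus_diag Rabs_R0; apply Rmax_r.
  - eapply Rle_trans; [apply H2; auto| apply Rmax_l].
Qed.

Lemma actC_comp k (s t : {perm 'I_k}) c : Defs.act k s (Defs.act k t c) = Defs.act k (s * t)%g c.
Proof. apply functional_extensionality => i; by rewrite /Defs.act permM. Qed.
Lemma actC1 k c : Defs.act k 1%g c = c.
Proof. apply functional_extensionality => i; by rewrite /Defs.act perm1. Qed.
Lemma actC_inv k (s : {perm 'I_k}) c : Defs.act k (s^-1)%g (Defs.act k s c) = c.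
Proof. by rewrite actC_comp mulVg actC1. Qed.

Lemma sameB_refl k c : sameB k c c.
Proof. exists 1%g; by rewrite actC1. Qed.
Lemma sameB_sym k c c' : sameB k c c' -> sameB k c' c.
Proof. intros [s ->]; exists (s^-1)%g; by rewrite actC_inv. Qed.
Lemma sameB_trans k c1 c2 c3 : sameB k c1 c2 -> sameB k c2 c3 -> sameB k c1 c3.
Proof. intros [s ->] [t ->]; exists (t * s)%g; by rewrite actC_comp. Qed.
Lemma sameB_act k c s : sameB k c (Defs.act k s c).
Proof. by exists s. Qed.

Lemma inF_act k e c s : inF k e c -> inF k e (Defs.act k s c).
Proof.
  intros [H1 H2]; split; [intro i; apply H1|].
  intros i j Hij; apply H2. intro E; apply Hij; exact (perm_inj E).
Qed.
Lemma inF_sameB k e c c' : inF k e c -> sameB k c c' -> inF k e c'.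
Proof. intros H [s ->]; by apply inF_act. Qed.

Lemma act_inj_conf k (q : Conf k) (s t : {perm 'I_k}) :
  (forall i j, i <> j -> q i <> q j) -> Defs.act k s q = Defs.act k t q -> s = t.
Proof.
  intros Hq E. apply/permP => i. have := equal_f E i; rewrite /Defs.act => E'.
  destruct (classic (s i = t i)) as [|Hn]; auto. exfalso; exact (Hq _ _ Hn E').
Qed.

Lemma sep_exists k e y : inF k e y -> exists s, 0 < s /\ sep k y s.
Proof.
  intros [Hr Hd].
  assert (Hp : forall a b, a <> b -> exists x, y a x <> y b x).
  { intros a b Hab. apply NNPP; intro Hn. apply (Hd a b Hab).
    apply functional_extensionality => x. apply NNPP; intro; apply Hn; eauto. }
  destruct (fin_min _ (fun a s => forall b, a <> b -> exists x, s <= Rabs (y a x - y b x)))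
    as [s [Hs H]].
  - intro a. apply (fin_min _ (fun b s => a <> b -> exists x, s <= Rabs (y a x - y b x))).
    + intro b. destruct (classic (a = b)) as [Heq|Hn].
      * exists 1; split; [lra| intro; contradiction].
      * destruct (Hp a b Hn) as [x Hx]. exists (Rabs (y a x - y b x)); split.
        -- apply Rabs_pos_lt; lra.
        -- intros _; exists x; lra.
    + intros b s s' H1 H2 H3. destruct (H1 H3) as [x Hx]; exists x; lra.
  - intros a s s' H1 H2 b Hb. destruct (H1 b Hb) as [x Hx]; exists x; lra.
  - exists s; split; auto.
Qed.


Lemma cont_ind (al be : R) (G : R -> Prop) :
  al <= be ->
  (forall a a', al <= a -> a <= a' -> a' <= be -> G a -> G a') ->
  G be ->
  (forall b, al <= b <= be -> exists eps, 0 < eps /\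
      forall a1 a2, al <= a2 <= b -> b <= a1 <= be -> a1 - b < eps -> b - a2 < eps ->
        G a1 -> G a2) ->
  G al.
Proof.
  intros Hab Hup Hbe Hstep. apply NNPP; intro Hn.
  set (E := fun a => al <= a <= be /\ ~ G a).
  destruct (completeness E) as [b [Hub Hlub]].
  { exists be; intros x [Hx _]; lra. }
  { exists al; split; [lra|auto]. }
  assert (Hb1 : al <= b) by (apply Hub; split; [lra|auto]).
  assert (Hb2 : b <= be) by (apply Hlub; intros x [Hx _]; lra).
  destruct (Hstep b (conj Hb1 Hb2)) as [eps [He Hs]].
  set (a1 := Rmin be (b + eps/2)). set (a2 := Rmax al (b - eps/2)).
  assert (Ha1 : b <= a1 <= be /\ a1 - b < eps).
  { unfold a1; split; [split|]; [apply Rmin_glb; lra|apply Rmin_l|].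
    pose proof (Rmin_r be (b + eps/2)); lra. }
  assert (Ha2 : al <= a2 <= b /\ b - a2 < eps).
  { unfold a2; split; [split|]; [apply Rmax_l| apply Rmax_lub; lra|].
    pose proof (Rmax_r al (b - eps/2)); lra. }
  assert (G1 : G a1).
  { unfold a1. destruct (Rle_dec be (b + eps/2)) as [Hle|Hlt].
    - rewrite Rmin_left; auto.
    - rewrite Rmin_right; [|lra]. apply NNPP; intro Hg.
      assert (b + eps/2 <= b) by (apply Hub; split; [lra|auto]). lra. }
  assert (G2 : G a2) by (apply (Hs a1 a2); tauto).
  unfold a2 in G2. destruct (Rle_dec (b - eps/2) al) as [Hle|Hlt].
  - rewrite Rmax_left in G2; auto.
  - rewrite Rmax_right in G2; [|lra].
    assert (exists x, E x /\ b - eps/2 < x) as [x [[Hx1 Hx2] Hx3]].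
    { apply NNPP; intro Hno. assert (b <= b - eps/2); [|lra].
      apply Hlub; intros x Ex. apply Rnot_lt_le; intro; apply Hno; eauto. }
    apply Hx2. eapply Hup; [| |apply Hx1| apply G2]; lra.
Qed.


Definition lev (e : dim) (m : nat) : Prop :=
  match e with Some M => m = M | None => True end.

Lemma inR_lev e m x : lev e m -> inR (Some m) x -> inR e x.
Proof. destruct e; simpl; [intros ->; auto| intros _ H; exists m; auto]. Qed.

Lemma inF_lev k e m c : lev e m -> inF k (Some m) c -> inF k e c.
Proof. intros Hl [H1 H2]; split; auto; intro i; eapply inR_lev; eauto. Qed.

Lemma fin_nat (T : finType) (P : T -> nat -> Prop) :
  (forall x, exists m, P x m) -> (forall x m m', P x m -> (m <= m')%N -> P x m') ->
  exists m, forall x, P x m.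
Proof.
  intros H Hm.
  assert (forall l : seq T, exists m, forall x, x \in l -> P x m).
  { elim=> [|y l [m IH]]; [exists O; intros x Hx; by rewrite in_nil in Hx|].
    destruct (H y) as [m' Hy]; exists (maxn m m'); intros x.
    rewrite in_cons => /orP [/eqP ->|Hx].
    - eapply Hm; eauto; apply leq_maxr.
    - eapply Hm; [apply IH; auto| apply leq_maxl]. }
  destruct (H0 (enum T)) as [m Hl]; exists m; intro x; apply Hl; by rewrite mem_enum.
Qed.

Lemma inR_mono m m' x : inR (Some m) x -> (m <= m')%N -> inR (Some m') x.
Proof. intros H Hm i Hi; apply H; exact (leq_trans Hm Hi). Qed.

Lemma inF_level k e c : inF k e c -> exists m, lev e m /\ inF k (Some m) c.
Proof.
  destruct e as [M|]; intros [H1 H2].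
  - exists M; split; [reflexivity| split; auto].
  - destruct (fin_nat _ (fun a m => inR (Some m) (c a))) as [m Hm].
    + intro a; exact (H1 a).
    + intros a m m' H Hmm; eapply inR_mono; eauto.
    + exists m; split; [exact I| split; auto].
Qed.

Definition openLev (k : nat) (e : dim) (X : Conf k -> Prop) : Prop :=
  (forall c, X c -> inF k e c) /\
  (forall m, lev e m -> forall c, X c -> inF k (Some m) c ->
     exists eps, 0 < eps /\ forall c', inF k (Some m) c' -> near_fin k m c eps c' -> X c').

Lemma openF_iff k e X : openF k e X <-> openLev k e X.
Proof.
  destruct e as [M|]; simpl; split.
  - intros [H1 H2]; split; auto. intros m -> c Hc _; auto.
  - intros [H1 H2]; split; auto. intros c Hc; apply (H2 M (erefl M) c Hc (H1 c Hc)).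
  - intros [H1 H2]; split; auto. intros m _ c Hc Hm.
    destruct (H2 m) as [_ H3]. destruct (H3 c (conj Hc Hm)) as [eps [He H4]].
    exists eps; split; auto; intros c' Hc' Hn; apply (H4 c' Hc' Hn).
  - intros [H1 H2]; split; auto. intros m; split; [tauto|].
    intros c [Hc Hm]. destruct (H2 m I c Hc Hm) as [eps [He H4]].
    exists eps; split; auto.
Qed.

(* coordinates beyond the level vanish *)
Lemma near_fin_all k m c c' eps a x :
  inF k (Some m) c -> inF k (Some m) c' -> 0 < eps -> near_fin k m c eps c' ->
  Rabs (c' a x - c a x) < eps.
Proof.
  intros [H1 _] [H2 _] He Hn. destruct (leqP m x) as [Hx|Hx].
  - rewrite (H1 a x Hx) (H2 a x Hx) Rminus_diag Rabs_R0; auto.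
  - apply Hn; auto.
Qed.

Lemma near_fin_dlt k m c c' eps a :
  inF k (Some m) c -> inF k (Some m) c' -> 0 < eps -> near_fin k m c eps c' ->
  dlt (c a) (c' a) eps.
Proof.
  intros H1 H2 He Hn. apply (dlt_of_fin _ _ m); auto.
  - intros x Hx; destruct H1 as [H1 _]; destruct H2 as [H2 _].
    rewrite (H1 a x Hx) (H2 a x Hx); auto.
  - intros x Hx; rewrite Rabs_minus_sym; apply Hn; auto.
Qed.

Lemma fin_max_ex (T : finType) (P : T -> R -> Prop) d :
  (forall x, exists d', d' < d /\ P x d') -> (forall x d1 d2, P x d1 -> d1 <= d2 -> P x d2) ->
  exists d', d' < d /\ forall x, P x d'.
Proof.
  intros H Hm. destruct (fin_min T (fun x s => P x (d - s))) as [s [Hs H2]].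
  - intro x; destruct (H x) as [d' [H1 H2]]; exists (d - d'); split; [lra|].
    replace (d - (d - d')) with d' by ring; auto.
  - intros x s s' H1 H2; eapply Hm; eauto; lra.
  - exists (d - s); split; [lra|auto].
Qed.

Lemma open_ball k e (y : Conf k) (sg : {perm 'I_k}) d :
  openF k e (fun w => inF k e w /\ nearC k y (Defs.act k sg w) d).
Proof.
  apply openF_iff; split; [tauto|]. intros m Hl w [Hw Hn] Hwm.
  destruct (fin_max_ex _ (fun a d' => dle (y a) (Defs.act k sg w a) d') d) as [d' [Hd' Hd]].
  { intro a; destruct (Hn a) as [d1 [H1 H2]]; exists d1; auto. }
  { intros a d1 d2 H1 H2 x; specialize (H1 x); lra. }
  exists ((d - d')/2); split; [lra|]. intros w' Hw'm Hnf. split; [eapply inF_lev; eauto|].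
  intro a. replace d with ((d' + (d - d')/2) + (d - d')/2) by field.
  apply dlt_trans with (v := w (sg a)).
  - exists d'; split; [lra| apply Hd].
  - apply (near_fin_dlt k m w w' _ (sg a)); auto; lra.
Qed.

Lemma open_union k e (I : Type) (X : I -> Conf k -> Prop) :
  (forall i, openF k e (X i)) -> openF k e (fun c => exists i, X i c).
Proof.
  intros H; apply openF_iff; split.
  - intros c [i Hi]; destruct (proj1 (openF_iff _ _ _) (H i)) as [H1 _]; eauto.
  - intros m Hl c [i Hi] Hm. destruct (proj1 (openF_iff _ _ _) (H i)) as [_ H2].
    destruct (H2 m Hl c Hi Hm) as [eps [He H3]]; exists eps; split; eauto.
Qed.

Lemma open_inter k e X Y : openF k e X -> openF k e Y -> openF k e (fun c => X c /\ Y c).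
Proof.
  intros HX HY. apply openF_iff in HX, HY. destruct HX as [X1 X2], HY as [Y1 Y2].
  apply openF_iff; split; [intros c [Hc _]; auto|].
  intros m Hl c [Hx Hy] Hm. destruct (X2 m Hl c Hx Hm) as [e1 [He1 H1]].
  destruct (Y2 m Hl c Hy Hm) as [e2 [He2 H2]].
  exists (Rmin e1 e2); split; [apply Rmin_pos; auto|]. intros c' Hc' Hn; split.
  - apply H1; auto; intros i j Hj; eapply Rlt_le_trans; [apply Hn; auto| apply Rmin_l].
  - apply H2; auto; intros i j Hj; eapply Rlt_le_trans; [apply Hn; auto| apply Rmin_r].
Qed.

Lemma openB_inter k e X Y : openB k e X -> openB k e Y -> openB k e (fun c => X c /\ Y c).
Proof.
  intros [H1 H2] [H3 H4]; split; [apply open_inter; auto|].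
  intros s c [Hx Hy]; split; auto.
Qed.

Lemma open_whole k e : openB k e (inF k e).
Proof.
  split; [|intros s c H; apply inF_act; auto].
  apply openF_iff; split; auto. intros m Hl c Hc Hm; exists 1; split; [lra|].
  intros c' Hc' _; eapply inF_lev; eauto.
Qed.

Lemma near_fin_act k m c eps c' (p : {perm 'I_k}) :
  near_fin k m c eps c' -> near_fin k m (Defs.act k p c) eps (Defs.act k p c').
Proof. intros H i j Hj; apply H; auto. Qed.

Lemma open_sat k e X : openF k e X -> openB k e (fun c => exists p, X (Defs.act k p c)).
Proof.
  intros HX; apply openF_iff in HX; destruct HX as [X1 X2]; split.
  - apply openF_iff; split.
    + intros c [p Hp]. have := inF_act _ _ _ (p^-1)%g (X1 _ Hp). by rewrite actC_inv.
    + intros m Hl c [p Hp] Hm. destruct (X2 m Hl _ Hp (inF_act _ _ _ p Hm)) as [eps [He H]].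
      exists eps; split; auto; intros c' Hc' Hn; exists p; apply H.
      * apply inF_act; auto.
      * apply near_fin_act; auto.
  - intros s c [p Hp]; exists (p * s^-1)%g. by rewrite actC_comp -mulgA mulVg mulg1.
Qed.

Definition Nbhd k e (y : Conf k) d (w : Conf k) : Prop :=
  inF k e w /\ exists sg, nearC k y (Defs.act k sg w) d.

Lemma open_Nbhd k e y d : openB k e (Nbhd k e y d).
Proof.
  split.
  - have H := open_union k e _ (fun sg w => inF k e w /\ nearC k y (Defs.act k sg w) d)
       (fun sg => open_ball k e y sg d).
    apply openF_iff in H; apply openF_iff; destruct H as [H1 H2]; split.
    + intros c [Hc _]; auto.
    + intros m Hl c [Hc [sg Hs]] Hm. destruct (H2 m Hl c (ex_intro _ sg (conj Hc Hs)) Hm)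
        as [eps [He H3]]. exists eps; split; auto; intros c' Hc' Hn.
      destruct (H3 c' Hc' Hn) as [sg' [Hc'' Hs']]; split; eauto.
  - intros s c [Hc [sg Hs]]; split; [apply inF_act; auto|].
    exists (sg * s^-1)%g. by rewrite actC_comp -mulgA mulVg mulg1.
Qed.


Lemma nearC_act k y w d (p : {perm 'I_k}) : nearC k y w d -> nearC k (Defs.act k p y) (Defs.act k p w) d.
Proof. intros H a; apply H. Qed.

Lemma sep_act k y s (p : {perm 'I_k}) : sep k y s -> sep k (Defs.act k p y) s.
Proof. intros H a b Hab; apply H; intro E; apply Hab; exact (perm_inj E). Qed.

Lemma pinA k (y w : Conf k) s d1 d2 (p : {perm 'I_k}) :
  sep k y s -> nearC k y w d1 -> nearC k (Defs.act k p y) w d2 -> d1 + d2 <= s ->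
  Defs.act k p y = y.
Proof.
  intros Hs H1 H2 Hd. apply functional_extensionality => a; rewrite /Defs.act.
  f_equal. symmetry. apply (sep_core k y s a (p a) (w a) d1 d2); auto; apply H2.
Qed.

Lemma pinB k (y w : Conf k) s d1 d2 (p : {perm 'I_k}) :
  sep k y s -> nearC k y w d1 -> nearC k y (Defs.act k p w) d2 -> d1 + d2 <= s ->
  Defs.act k p w = w.
Proof.
  intros Hs H1 H2 Hd. apply functional_extensionality => a; rewrite /Defs.act.
  f_equal. symmetry; apply (sep_core k y s a (p a) (w (p a)) d2 d1); [auto| apply H2| apply H1| lra].
Qed.

Lemma pinB' k (y w w' : Conf k) s d1 d2 :
  sep k y s -> nearC k y w d1 -> sameB k w w' -> nearC k y w' d2 -> d1 + d2 <= s -> w' = w.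
Proof. intros Hs H1 [p ->] H2 Hd; eapply pinB; eauto. Qed.

Lemma reorder k h h' g d (sg : {perm 'I_k}) :
  nearC k h (Defs.act k sg h') d -> sameB k h g -> exists w, sameB k h' w /\ nearC k g w d.
Proof.
  intros Hn [t ->]. exists (Defs.act k t (Defs.act k sg h')); split.
  - rewrite actC_comp; apply sameB_act.
  - apply nearC_act; auto.
Qed.

Definition cont_on k (D : R -> Prop) (g : R -> Conf k) (t : R) : Prop :=
  forall d, 0 < d -> exists eps, 0 < eps /\
    forall t', D t' -> Rabs (t' - t) < eps -> nearC k (g t) (g t') d.

Lemma cont_on_sub k (D D' : R -> Prop) g t :
  (forall x, D' x -> D x) -> cont_on k D g t -> cont_on k D' g t.
Proof. intros Hs H d Hd; destruct (H d Hd) as [eps [He H1]]; exists eps; split; auto. Qed.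

Lemma uniq_left k (al be : R) (g1 g2 : R -> Conf k) :
  al <= be ->
  (forall t, al <= t <= be -> sameB k (g1 t) (g2 t)) ->
  (forall t, al <= t <= be -> exists s, 0 < s /\ sep k (g1 t) s) ->
  (forall t, al <= t <= be -> cont_on k (fun x => al <= x <= be) g1 t) ->
  (forall t, al <= t <= be -> cont_on k (fun x => al <= x <= be) g2 t) ->
  g1 be = g2 be -> forall t, al <= t <= be -> g1 t = g2 t.
Proof.
  intros Hab Hs Hsep Hc1 Hc2 Hbe t Ht.
  apply (cont_ind al be (fun a => forall v, a <= v <= be -> g1 v = g2 v)); auto.
  - intros a a' _ H1 H2 H v Hv; apply H; lra.
  - intros v Hv; replace v with be by lra; auto.
  - intros b Hb. destruct (Hsep b Hb) as [s [Hs0 Hsb]].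
    destruct (Hc1 b Hb (s/3)) as [e1 [He1 C1]]; [lra|].
    destruct (Hc2 b Hb (s/3)) as [e2 [He2 C2]]; [lra|].
    exists (Rmin e1 e2); split; [apply Rmin_pos; auto|].
    intros a1 a2 Ha2 Ha1 Hd1 Hd2 HG1.
    pose proof (Rmin_l e1 e2); pose proof (Rmin_r e1 e2).
    assert (Eb : g1 b = g2 b).
    { have E1 : g1 a1 = g2 a1 by apply HG1; lra.
      have N1 := C1 a1 ltac:(lra) ltac:(apply Rabs_def1; lra).
      have N2 := C2 a1 ltac:(lra) ltac:(apply Rabs_def1; lra).
      rewrite -E1 in N2. destruct (Hs b Hb) as [p Hp]. rewrite Hp in N2 *.
      symmetry; eapply pinA; eauto; lra. }
    intros v Hv. destruct (Rle_dec a1 v) as [Hle|Hlt]; [apply HG1; lra|].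
    have N1 := C1 v ltac:(lra) ltac:(apply Rabs_def1; lra).
    have N2 := C2 v ltac:(lra) ltac:(apply Rabs_def1; lra).
    rewrite -Eb in N2. destruct (Hs v ltac:(lra)) as [p Hp]. rewrite Hp in N2 *.
    symmetry; eapply pinB; eauto; lra.
Qed.


Lemma tri_abs t u b eps : Rabs (t - u) < eps - Rabs (u - b) -> Rabs (t - b) < eps.
Proof.
  intro H. replace (t - b) with ((t - u) + (u - b)) by ring.
  eapply Rle_lt_trans; [apply Rabs_triang| lra].
Qed.

Section Lift.
Variables (k n : nat) (e : dim) (U : Conf k -> Prop) (H : Conf k -> R -> Conf k) (b0 : Conf k).
Hypothesis HU : openB k (Some n) U.
Hypothesis HH : homotopyB k (Some n) e U H.
Hypothesis H1 : forall c, U c -> sameB k b0 (H c R1).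

Lemma HF c t : U c -> inI t -> inF k e (H c t).
Proof. destruct HH as [Hf _]; auto. Qed.

Lemma HC c t d : U c -> inI t -> 0 < d -> exists V eps, openB k (Some n) V /\ V c /\ 0 < eps /\
  forall c' t', V c' -> U c' -> inI t' -> Rabs (t' - t) < eps ->
    forall g, sameB k (H c t) g -> exists w, sameB k (H c' t') w /\ nearC k g w d.
Proof.
  intros Hc Ht Hd. destruct HH as [Hf [Heq Hcont]].
  destruct (Hcont (Nbhd k e (H c t) d) (open_Nbhd k e _ d) c t Hc Ht) as [V [eps [HV [Vc [He HP]]]]].
  { split; [apply Hf; auto| exists 1%g; rewrite actC1; apply nearC_refl; auto]. }
  exists V, eps; split; [auto|split; [auto|split; [auto|]]]. intros c' t' Vc' Uc' Ht' Hd' g Hg.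
  destruct (HP c' t' Vc' Uc' Ht' Hd') as [_ [sg Hs]]. eapply reorder; eauto.
Qed.

Definition liftOn c a (g : R -> Conf k) : Prop :=
  (forall u, a <= u <= 1 -> sameB k (H c u) (g u)) /\ g 1 = b0 /\
  (forall u, a <= u <= 1 -> cont_on k (fun x => a <= x <= 1) g u).

Definition ell c (y0 : Conf k) d t : Conf k :=
  epsilon (inhabits y0) (fun z => sameB k (H c t) z /\ nearC k y0 z d).

Lemma ell_spec c y0 d t : (exists z, sameB k (H c t) z /\ nearC k y0 z d) ->
  sameB k (H c t) (ell c y0 d t) /\ nearC k y0 (ell c y0 d t) d.
Proof. intro Hz; apply (epsilon_spec (inhabits y0) _ Hz). Qed.

Lemma ell_uniq c y0 d t s z d2 : sep k y0 s -> d + d2 <= s ->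
  (exists z, sameB k (H c t) z /\ nearC k y0 z d) ->
  sameB k (H c t) z -> nearC k y0 z d2 -> z = ell c y0 d t.
Proof.
  intros Hs Hd Hex Hz Hn. destruct (ell_spec c y0 d t Hex) as [S1 S2].
  eapply pinB'; eauto. eapply sameB_trans; [apply sameB_sym, S1| auto].
Qed.

Lemma ell_cont c y0 d s b eps0 : U c -> sep k y0 s -> 4 * d <= s -> 0 < d ->
  (forall t, inI t -> Rabs (t - b) < eps0 -> exists z, sameB k (H c t) z /\ nearC k y0 z d) ->
  forall u, inI u -> Rabs (u - b) < eps0 -> forall d', 0 < d' -> exists eps', 0 < eps' /\
    forall t', inI t' -> Rabs (t' - u) < eps' -> Rabs (t' - b) < eps0 ->
      nearC k (ell c y0 d u) (ell c y0 d t') d'.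
Proof.
  intros Hc Hs Hd Hd0 W u Hu Hub d' Hd'.
  destruct (HC c u (Rmin d' d) Hc Hu) as [V [eps1 [_ [Vc [He1 P]]]]]; [apply Rmin_pos; auto|].
  exists eps1; split; auto. intros t' Ht' Htu Htb.
  destruct (ell_spec c y0 d u (W u Hu Hub)) as [Su Nu].
  destruct (P c t' Vc Hc Ht' Htu _ Su) as [w [Sw Nw]].
  destruct (ell_spec c y0 d t' (W t' Ht' Htb)) as [St Nt].
  assert (E : w = ell c y0 d t').
  { eapply pinB'; [apply Hs| apply Nt| |apply (nearC_trans _ _ _ _ _ _ Nu Nw)|].
    - eapply sameB_trans; [apply sameB_sym, St| auto].
    - pose proof (Rmin_r d' d); lra. }
  rewrite -E. eapply nearC_mono; [apply Nw| apply Rmin_l].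
Qed.

Lemma lift_exists c : U c -> exists g, liftOn c 0 g.
Proof.
  intro Hc.
  apply (cont_ind 0 1 (fun a => exists g, liftOn c a g)); [lra| | |].
  - intros a a' Ha Haa' Ha' [g [L1 [L2 L3]]]; exists g; split; [|split]; auto.
    + intros u Hu; apply L1; lra.
    + intros u Hu; eapply cont_on_sub; [|apply L3; lra]; simpl; intros; lra.
  - exists (fun _ => b0); split; [|split]; auto.
    + intros u Hu; replace u with R1 by lra; apply sameB_sym, H1; auto.
    + intros u Hu d Hd; exists 1; split; [lra|]; intros; apply nearC_refl; auto.
  - intros b Hb.
    have Hbi : inI b by (unfold inI; lra).
    destruct (sep_exists _ _ _ (HF c b Hc Hbi)) as [s [Hs0 Hs]].
    destruct (HC c b (s/4) Hc Hbi) as [V0 [eps0 [_ [V0c [He0 P0]]]]]; [lra|].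
    exists eps0; split; auto. intros a1 a2 Ha2 Ha1 Hd1 Hd2 [g [L1 [L2 L3]]].
    have Ha1i : inI a1 by (unfold inI; lra).
    destruct (P0 c a1 V0c Hc Ha1i ltac:(apply Rabs_def1; lra) _ (sameB_refl k (H c b)))
      as [w1 [Sw1 Nw1]].
    destruct (sameB_trans _ _ _ _ (sameB_sym _ _ _ Sw1) (L1 a1 ltac:(lra))) as [tau Etau].
    set (y0 := Defs.act k tau (H c b)).
    have Ny : nearC k y0 (g a1) (s/4) by rewrite Etau; apply nearC_act.
    have Sy : sep k y0 s by apply sep_act.
    have W : forall t, inI t -> Rabs (t - b) < eps0 ->
        exists z, sameB k (H c t) z /\ nearC k y0 z (s/4).
    { intros t Ht Htb. apply (P0 c t V0c Hc Ht Htb). apply sameB_act. }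
    have E1 : g a1 = ell c y0 (s/4) a1.
    { eapply ell_uniq; [apply Sy| |apply W; auto; apply Rabs_def1; lra| apply L1; lra| apply Ny]. lra. }
    have LC := ell_cont c y0 (s/4) s b eps0 Hc Sy ltac:(lra) ltac:(lra) W.
    set (l := ell c y0 (s/4)) in *.
    exists (fun t => if Rlt_dec t a1 then l t else g t). split; [|split].
    + intros u Hu. destruct (Rlt_dec u a1) as [Hlt|Hge]; [|apply L1; lra].
      apply (ell_spec c y0 (s/4) u), W; [unfold inI; lra| apply Rabs_def1; lra].
    + destruct (Rlt_dec 1 a1); [lra| auto].
    + intros u Hu d' Hd'.
      destruct (Rlt_dec u a1) as [Hlt|Hge].
      * have Hui : inI u by (unfold inI; lra).
        have Hub : Rabs (u - b) < eps0 by apply Rabs_def1; lra.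
        destruct (LC u Hui Hub d' Hd') as [e1 [He1 C1]].
        exists (Rmin e1 (Rmin (a1 - u) (eps0 - Rabs (u - b)))).
        split; [apply Rmin_pos; [auto| apply Rmin_pos; lra]|].
        intros t' Ht' Htu.
        pose proof (Rmin_l e1 (Rmin (a1 - u) (eps0 - Rabs (u - b)))).
        pose proof (Rmin_r e1 (Rmin (a1 - u) (eps0 - Rabs (u - b)))).
        pose proof (Rmin_l (a1 - u) (eps0 - Rabs (u - b))).
        pose proof (Rmin_r (a1 - u) (eps0 - Rabs (u - b))).
        have Hta : t' < a1 by (apply Rabs_def2 in Htu; lra).
        destruct (Rlt_dec t' a1); [|lra].
        apply C1; [unfold inI; lra| lra| apply (tri_abs _ u); lra].
      * destruct (Rlt_dec a1 u) as [Hgt|Heq].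
        -- destruct (L3 u ltac:(lra) d' Hd') as [e1 [He1 C1]].
           exists (Rmin e1 (u - a1)); split; [apply Rmin_pos; lra|].
           intros t' Ht' Htu. pose proof (Rmin_l e1 (u - a1)); pose proof (Rmin_r e1 (u - a1)).
           have Hta : a1 < t' by (apply Rabs_def2 in Htu; lra).
           destruct (Rlt_dec t' a1); [lra|]. apply C1; lra.
        -- have Eu : u = a1 by lra. subst u.
           have Hub : Rabs (a1 - b) < eps0 by apply Rabs_def1; lra.
           destruct (LC a1 Ha1i Hub d' Hd') as [e1 [He1 C1]].
           destruct (L3 a1 ltac:(lra) d' Hd') as [e2 [He2 C2]].
           exists (Rmin e1 (Rmin e2 (eps0 - Rabs (a1 - b)))).
           split; [apply Rmin_pos; [auto| apply Rmin_pos; lra]|].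
           intros t' Ht' Htu.
           pose proof (Rmin_l e1 (Rmin e2 (eps0 - Rabs (a1 - b)))).
           pose proof (Rmin_r e1 (Rmin e2 (eps0 - Rabs (a1 - b)))).
           pose proof (Rmin_l e2 (eps0 - Rabs (a1 - b))).
           pose proof (Rmin_r e2 (eps0 - Rabs (a1 - b))).
           destruct (Rlt_dec t' a1) as [Hl|Hl].
           ++ rewrite E1. apply C1; [unfold inI; lra| lra| apply (tri_abs _ a1); lra].
           ++ apply C2; lra.
Qed.


Definition Gam c : R -> Conf k := epsilon (inhabits (fun _ : R => b0)) (fun g => liftOn c 0 g).

Lemma Gam_spec c : U c -> liftOn c 0 (Gam c).
Proof. intro Hc; apply (epsilon_spec (inhabits (fun _ : R => b0)) (fun g => liftOn c 0 g)), lift_exists; auto. Qed.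

Lemma lift_uniq c c' g g' : U c ->
  (forall t, inI t -> sameB k (H c t) (H c' t)) -> liftOn c 0 g -> liftOn c' 0 g' ->
  forall t, inI t -> g t = g' t.
Proof.
  intros Hc HS [L1 [L2 L3]] [L1' [L2' L3']] t Ht.
  unfold inI in Ht.
  refine (uniq_left k 0 1 g g' ltac:(lra) _ _ L3 L3' ltac:(congruence) t ltac:(lra)).
  - intros u Hu. eapply sameB_trans; [apply sameB_sym, L1; auto|].
    eapply sameB_trans; [apply HS; unfold inI; lra| apply L1'; auto].
  - intros u Hu. apply (sep_exists k e). eapply inF_sameB; [apply (HF c u Hc)| apply L1; auto].
    unfold inI; lra.
Qed.

Lemma tube c : U c -> forall eps, 0 < eps -> exists V, openB k (Some n) V /\ V c /\
  forall c', V c' -> U c' -> nearC k (Gam c 0) (Gam c' 0) eps.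
Proof.
  intro Hc.
  destruct (Gam_spec c Hc) as [L1 [L2 L3]].
  enough (HG : forall u, 0 <= u <= 1 -> forall eps, 0 < eps -> exists V, openB k (Some n) V /\ V c /\
    forall c', V c' -> U c' -> nearC k (Gam c u) (Gam c' u) eps).
  { apply HG; lra. }
  apply (cont_ind 0 1 (fun a => forall u, a <= u <= 1 -> forall eps, 0 < eps ->
     exists V, openB k (Some n) V /\ V c /\
       forall c', V c' -> U c' -> nearC k (Gam c u) (Gam c' u) eps)); [lra| | |].
  - intros a a' Ha Haa' Ha' HG u Hu; apply HG; lra.
  - intros u Hu eps He. replace u with 1 by lra. exists U; split; [auto| split; [auto|]].
    intros c' Vc' Uc'. destruct (Gam_spec c' Uc') as [_ [L2' _]]. rewrite L2 L2'.
    apply nearC_refl; auto.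
  - intros b Hb.
    have Hbi : inI b by (unfold inI; lra).
    destruct (sep_exists _ _ _ (inF_sameB _ _ _ _ (HF c b Hc Hbi) (L1 b Hb))) as [s [Hs0 Hs]].
    destruct (HC c b (s/4) Hc Hbi) as [V0 [eps0 [HV0 [V0c [He0 P0]]]]]; [lra|].
    destruct (L3 b Hb (s/4)) as [eps1 [He1 C1]]; [lra|].
    exists (Rmin eps0 eps1); split; [apply Rmin_pos; auto|].
    pose proof (Rmin_l eps0 eps1); pose proof (Rmin_r eps0 eps1).
    intros a1 a2 Ha2 Ha1 Hd1 Hd2 HG1 u Hu eps He.
    destruct (Rle_dec a1 u) as [Hle|Hlt]; [apply HG1; lra|].
    have Hui : inI u by (unfold inI; lra).
    have Ha1i : inI a1 by (unfold inI; lra).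
    destruct (HG1 a1 ltac:(lra) (s/4) ltac:(lra)) as [V1 [HV1 [V1c P1]]].
    destruct (HC c u (Rmin eps (s/4)) Hc Hui) as [Vu [epsu [HVu [Vuc [Heu Pu]]]]];
      [apply Rmin_pos; lra|].
    exists (fun c' => (V0 c' /\ V1 c') /\ Vu c'). split; [apply openB_inter; [apply openB_inter|]; auto|].
    split; [auto|]. intros c' [[V0c' V1c'] Vuc'] Uc'.
    destruct (Gam_spec c' Uc') as [L1' [L2' L3']].
    set (yb := Gam c b) in *.
    have W : forall t, inI t -> Rabs (t - b) < eps0 ->
        exists z, sameB k (H c' t) z /\ nearC k yb z (s/4).
    { intros t Ht Htb. apply (P0 c' t V0c' Uc' Ht Htb). apply L1; auto. }
    have Nyb : forall t, 0 <= t <= 1 -> Rabs (t - b) < eps1 -> nearC k yb (Gam c t) (s/4).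
    { intros t Ht Htb; apply C1; auto. }
    have E1 : Gam c' a1 = ell c' yb (s/4) a1.
    { eapply (ell_uniq c' yb (s/4) a1 s _ (s/4 + s/4)); [apply Hs| lra| | apply L1'; lra|].
      - apply W; auto; apply Rabs_def1; lra.
      - eapply (nearC_trans k yb (Gam c a1)); [apply Nyb; [lra| apply Rabs_def1; lra]| apply P1; auto]. }
    have LC := ell_cont c' yb (s/4) s b eps0 Uc' Hs ltac:(lra) ltac:(lra) W.
    have Eu : Gam c' u = ell c' yb (s/4) u.
    { apply (uniq_left k u a1); [lra| | | | |auto| lra].
      - intros t Ht. eapply sameB_trans; [apply sameB_sym, L1'; lra|].
        apply (ell_spec c' yb (s/4) t), W; [unfold inI; lra| apply Rabs_def1; lra].
      - intros t Ht. apply (sep_exists k e). eapply inF_sameB; [apply (HF c' t Uc')| apply L1'; lra].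
        unfold inI; lra.
      - intros t Ht. eapply cont_on_sub; [|apply L3'; lra]. simpl; intros; lra.
      - intros t Ht d' Hd'. destruct (LC t ltac:(unfold inI; lra) ltac:(apply Rabs_def1; lra) d' Hd')
          as [e2 [He2 C2]]. exists e2; split; auto. intros t' Ht' Htt.
        apply C2; [unfold inI; lra| auto| apply Rabs_def1; lra]. }
    destruct (Pu c' u Vuc' Uc' Hui ltac:(rewrite Rminus_diag Rabs_R0; lra) (Gam c u) (L1 u ltac:(lra)))
      as [w [Sw Nw]].
    assert (Ew : w = Gam c' u).
    { rewrite Eu. eapply pinB'; [apply Hs| | |eapply (nearC_trans k yb (Gam c u)); [apply Nyb; [lra| apply Rabs_def1; lra]| apply Nw]|].
      - apply (ell_spec c' yb (s/4) u), W; [auto| apply Rabs_def1; lra].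
      - eapply sameB_trans; [apply sameB_sym| apply Sw].
        apply (ell_spec c' yb (s/4) u), W; [auto| apply Rabs_def1; lra].
      - pose proof (Rmin_r eps (s/4)); lra. }
    rewrite -Ew. eapply nearC_mono; [apply Nw| apply Rmin_l].
Qed.

Definition secF c : Conf k := Gam c 0.

End Lift.


Lemma sec_exists k n e U H b0 : openB k (Some n) U -> homotopyB k (Some n) e U H ->
  (forall c, U c -> sameB k c (H c R0)) -> (forall c, U c -> sameB k b0 (H c R1)) ->
  exists s, local_section k n U s.
Proof.
  intros HU HH H0 H1.
  have UF : forall c, U c -> inF k (Some n) c.
  { intros c Hc; destruct HU as [HU1 _]; apply openF_iff in HU1; apply HU1; auto. }
  exists (fun c => Gam k H b0 c 0). split; [|split; [|split]].
  - intros c Hc. destruct (Gam_spec k n e U H b0 HH H1 c Hc) as [L1 _].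
    eapply inF_sameB; [apply UF; eauto|]. eapply sameB_trans; [apply H0; auto| apply L1; lra].
  - intros c Hc. destruct (Gam_spec k n e U H b0 HH H1 c Hc) as [L1 _].
    eapply sameB_trans; [apply H0; auto| apply L1; lra].
  - intros p c Hc. have Hc' : U (Defs.act k p c) by (destruct HU as [_ HU2]; apply HU2; auto).
    symmetry. apply (lift_uniq k n e U H b0 HH c (Defs.act k p c)); auto.
    + intros t Ht; destruct HH as [_ [HH2 _]]; apply HH2; auto.
    + apply (Gam_spec k n e U H b0 HH H1); auto.
    + apply (Gam_spec k n e U H b0 HH H1); auto.
    + unfold inI; lra.
  - intros O HO c Hc Oc. apply openF_iff in HO. destruct HO as [O1 O2].
    destruct (O2 n (erefl n) _ Oc (O1 _ Oc)) as [eps [He Ho]].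
    destruct (tube k n e U H b0 HU HH H1 c Hc eps He) as [V [HV [Vc P]]].
    exists V; split; [auto| split; [auto|]]. intros c' Vc' Uc'.
    apply Ho.
    + destruct (Gam_spec k n e U H b0 HH H1 c' Uc') as [L1 _].
      eapply inF_sameB; [apply UF; eauto|]. eapply sameB_trans; [apply H0; auto| apply L1; lra].
    + intros i j Hj. rewrite Rabs_minus_sym. apply dlt_coord, P; auto.
Qed.

Lemma cat_to_secat k n e m : cat_incl_le k n e m -> secat_le k n m.
Proof.
  intros [U [HU Hcov]]. exists U; split; auto.
  intros i Hi. destruct (HU i Hi) as [HUo [H [b0 [Hb0 [HH [H0 H1]]]]]].
  split; auto. eapply sec_exists; eauto.
Qed.


Lemma openB_restr k n r V : openB k (tdim n r) V ->
  openB k (Some n) (fun c => V c /\ inF k (Some n) c).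
Proof.
  intros [HV Hinv]; split; [|intros s c [H1 H2]; split; [apply Hinv; auto| apply inF_act; auto]].
  destruct r as [r'|]; simpl in *.
  - destruct HV as [V1 V2]; split; [tauto|].
    intros c [Vc Fc]. destruct (V2 c Vc) as [eps [He Ho]]. exists eps; split; auto.
    intros c' Fc' Hn. split; auto. apply Ho.
    + destruct Fc' as [F1 F2]; split; auto; intro i; eapply inR_mono; [apply F1| apply leq_addr].
    + intros i j Hj. destruct (leqP n j) as [Hnj|Hnj].
      * destruct Fc as [F1 _]; destruct Fc' as [F1' _].
        rewrite (F1 i j Hnj) (F1' i j Hnj) Rminus_diag Rabs_R0; auto.
      * apply Hn; auto.
  - destruct HV as [_ V2]. exact (V2 n).
Qed.

Lemma catB_to_cat k n r m : catB_le k n (tdim n r) m -> cat_incl_le k n (tdim n r) m.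
Proof.
  intros [U [HU Hcov]]. exists (fun i c => U i c /\ inF k (Some n) c). split.
  - intros i Hi. destruct (HU i Hi) as [HUo [H [b0 [Hb0 [[HH1 [HH2 HH3]] [H0 H1]]]]]].
    split; [apply (openB_restr k n r); auto|].
    exists H, b0; split; [auto| split; [split; [|split]| split]].
    + intros c t [Uc _] Ht; auto.
    + intros s c t [Uc _] Ht; auto.
    + intros O HO c t [Uc Fc] Ht Oc. destruct (HH3 O HO c t Uc Ht Oc) as [V [eps [HV [Vc [He P]]]]].
      exists (fun c => V c /\ inF k (Some n) c), eps; split; [apply (openB_restr k n r); auto|].
      split; [auto| split; [auto|]]. intros c' t' [Vc' _] [Uc' _] Ht' Hd; auto.
    + intros c [Uc _]; auto.
    + intros c [Uc _]; auto.
  - intros c Hc. destruct (Hcov c Hc) as [i [Hi Ui]]. exists i; auto.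
Qed.


Lemma inF_near k M y s z : inF k (Some M) y -> sep k y s -> 0 < s ->
  (forall a, inR (Some M) (z a)) -> (forall a j, Rabs (z a j - y a j) < s/2) ->
  inF k (Some M) z.
Proof.
  intros Fy Hs Hs0 Hz Hn. split; auto. intros a b Hab E.
  destruct (Hs a b Hab) as [j Hj]. have := Hn a j; have := Hn b j. rewrite E.
  intros H1 H2. have : Rabs (y a j - y b j) < s; [|lra].
  replace (y a j - y b j) with ((y a j - z b j) + (z b j - y b j)) by ring.
  eapply Rle_lt_trans; [apply Rabs_triang|]. rewrite Rabs_minus_sym in H2. lra.
Qed.

Lemma bound_exists k m c : inF k (Some m) c -> exists B, 0 <= B /\ forall a j, Rabs (c a j) <= B.
Proof.
  intros [Fc _].
  assert (Hb : forall a, exists B, 0 <= B /\ forall j, Rabs (c a j) <= B).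
  { intro a. assert (forall M, exists B, 0 <= B /\ forall j, (j < M)%N -> Rabs (c a j) <= B).
    { induction M as [|M [B [HB IH]]].
      - exists 0; split; [lra| intros j Hj; inversion Hj].
      - exists (Rmax B (Rabs (c a M))); split; [eapply Rle_trans; [apply HB| apply Rmax_l]|].
        intros j Hj. rewrite ltnS leq_eqVlt in Hj. case/orP: Hj => [/eqP ->|Hj]; [apply Rmax_r|].
        eapply Rle_trans; [apply IH; auto| apply Rmax_l]. }
    destruct (H m) as [B [HB HB2]]; exists B; split; auto. intro j.
    destruct (leqP m j) as [Hj|Hj]; [rewrite (Fc a j Hj) Rabs_R0; auto| apply HB2; auto]. }
  assert (forall l : seq 'I_k, exists B, 0 <= B /\ forall a, a \in l -> forall j, Rabs (c a j) <= B).
  { elim=> [|y l [B [HB IH]]]; [exists 0; split; [lra| intros a Ha; by rewrite in_nil in Ha]|].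
    destruct (Hb y) as [B' [HB' Hy]]. exists (Rmax B B'); split; [eapply Rle_trans; [apply HB| apply Rmax_l]|].
    intros a; rewrite in_cons => /orP [/eqP ->|Ha] j.
    - eapply Rle_trans; [apply Hy| apply Rmax_r].
    - eapply Rle_trans; [apply IH; auto| apply Rmax_l]. }
  destruct (H (enum 'I_k)) as [B [HB P]]; exists B; split; auto. intros a; apply P; by rewrite mem_enum.
Qed.

Section Proj.
Variable n : nat.
Definition proj (x : Rpt) : Rpt := fun j => if (j < n)%N then x j else 0.
Definition projC k (c : Conf k) : Conf k := fun a => proj (c a).

Lemma proj_inR x : inR (Some n) (proj x).
Proof. intros j Hj; rewrite /proj; case: ltnP => // H; exfalso; move: H; by rewrite ltnNge Hj. Qed.

Lemma projC_id k c : inF k (Some n) c -> projC k c = c.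
Proof.
  intros [Fc _]. apply functional_extensionality => a; apply functional_extensionality => j.
  rewrite /projC /proj. case: ltnP => Hj //. symmetry; apply Fc; auto.
Qed.

Lemma open_proj k e X : openF k (Some n) X ->
  openF k e (fun c => inF k e c /\ inF k (Some n) (projC k c) /\ X (projC k c)).
Proof.
  intros HX; apply openF_iff in HX; destruct HX as [X1 X2].
  apply openF_iff; split; [tauto|].
  intros m Hl c [Fc [Fq Xq]] Fm.
  destruct (X2 n (erefl n) _ Xq Fq) as [e1 [He1 P1]].
  destruct (sep_exists _ _ _ Fq) as [s [Hs0 Hs]].
  exists (Rmin e1 (s/2)); split; [apply Rmin_pos; lra|].
  pose proof (Rmin_l e1 (s/2)); pose proof (Rmin_r e1 (s/2)).
  intros c' Fm' Hn.
  have Hpr : forall a j, Rabs (projC k c' a j - projC k c a j) < Rmin e1 (s/2).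
  { intros a j. rewrite /projC /proj. case: ltnP => Hj.
    - apply (near_fin_all k m c c'); auto; apply Rmin_pos; lra.
    - rewrite Rminus_diag Rabs_R0; apply Rmin_pos; lra. }
  have Fq' : inF k (Some n) (projC k c').
  { apply (inF_near k n (projC k c) s); auto. intro a; apply proj_inR.
    intros a j; have := Hpr a j; lra. }
  split; [eapply inF_lev; eauto| split; auto].
  apply P1; auto. intros i j Hj; have := Hpr i j; lra.
Qed.
End Proj.


Lemma comb_est u u'' x x' b eta B Kb :
  0 <= u'' <= 1 -> Rabs (x' - x) < eta -> Rabs (u'' - u) < eta -> Rabs x <= B -> Rabs b <= Kb ->
  0 <= B -> 0 <= Kb ->
  Rabs (((1 - u'') * x' + u'' * b) - ((1 - u) * x + u * b)) < eta * (1 + B + Kb).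
Proof.
  intros Hu H1 H2 H3 H4 HB HK.
  replace (((1 - u'') * x' + u'' * b) - ((1 - u) * x + u * b))
    with ((1 - u'') * (x' - x) + ((u - u'') * x + (u'' - u) * b)) by ring.
  eapply Rle_lt_trans; [apply Rabs_triang|].
  eapply Rle_lt_trans; [apply Rplus_le_compat_l, Rabs_triang|].
  rewrite !Rabs_mult. rewrite (Rabs_minus_sym u u'').
  have A1 : Rabs (1 - u'') <= 1 by (rewrite Rabs_right; lra).
  have P1 := Rabs_pos (x' - x). have P2 := Rabs_pos (u'' - u).
  have P3 := Rabs_pos x. have P4 := Rabs_pos b. have P5 := Rabs_pos (1 - u'').
  nra.
Qed.

Lemma near_fin_mono k m c c' r r' : near_fin k m c r c' -> r <= r' -> near_fin k m c r' c'.
Proof. intros H Hr i j Hj; eapply Rlt_le_trans; [apply H; auto| auto]. Qed.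

Section Constr.
Variables (k n : nat) (e : dim) (U : Conf k -> Prop) (s : Conf k -> Conf k).
Hypothesis HU : openB k (Some n) U.
Hypothesis Hs : local_section k n U s.
Variable L : nat -> nat.
Hypothesis HL1 : forall m, lev e m -> lev e (L m).
Hypothesis HL2 : forall m, lev e m -> (m <= L m)%N.
Hypothesis HL3 : forall m, lev e m -> (n < L m)%N.
Hypothesis He0 : exists m, lev e m.

Definition b0 : Conf k := fun a j => if (j == n)%N then INR (nat_of_ord a) else 0.

Lemma b0_inR a : inR (Some n.+1) (b0 a).
Proof. intros j Hj; rewrite /b0. case: eqP => // E. subst j. by rewrite ltnn in Hj. Qed.

Lemma b0_dist a b : a <> b -> b0 a <> b0 b.
Proof.
  intros Hab E. apply Hab. have := equal_f E n. rewrite /b0 eqxx. intro E'.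
  apply val_inj; simpl. apply INR_eq; auto.
Qed.

Lemma b0_bound a j : Rabs (b0 a j) <= INR k.
Proof.
  rewrite /b0; case: eqP => _.
  - rewrite Rabs_right; [|apply Rle_ge, pos_INR]. apply le_INR. apply/leP. apply ltnW, ltn_ord.
  - rewrite Rabs_R0; apply pos_INR.
Qed.

Definition Gm (sg : {perm 'I_k}) (c : Conf k) (u : R) : Conf k :=
  fun a j => (1 - u) * c (sg a) j + u * b0 a j.

Lemma Gm_inR sg c u m a : (forall a, inR (Some m) (c a)) -> lev e m -> inR (Some (L m)) (Gm sg c u a).
Proof.
  intros Hc Hl j Hj. rewrite /Gm. rewrite (Hc (sg a) j (leq_trans (HL2 m Hl) Hj)).
  rewrite (b0_inR a j (leq_trans (HL3 m Hl) Hj)). ring.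
Qed.

Definition W (c : Conf k) : Prop := inF k e c /\ inF k (Some n) (projC n k c) /\ U (projC n k c).

Lemma W_open : openB k e W.
Proof.
  split; [apply open_proj; destruct HU; auto|].
  intros p c [F1 [F2 F3]]; split; [apply inF_act; auto| split].
  - change (inF k (Some n) (Defs.act k p (projC n k c))); apply inF_act; auto.
  - change (U (Defs.act k p (projC n k c))). destruct HU as [_ Hi]. apply (Hi p _ F3).
Qed.

Definition Sig (c : Conf k) : {perm 'I_k} :=
  epsilon (inhabits 1%g) (fun sg => s (projC n k c) = Defs.act k sg (projC n k c)).

Lemma Sig_spec c : W c -> s (projC n k c) = Defs.act k (Sig c) (projC n k c).
Proof.
  intros [_ [_ Hc]]. destruct Hs as [_ [S2 _]]. destruct (S2 _ Hc) as [sg Hsg].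
  apply (epsilon_spec (inhabits 1%g) (fun sg => s (projC n k c) = Defs.act k sg (projC n k c))).
  exists sg; auto.
Qed.

Lemma W_act c p : W c -> W (Defs.act k p c).
Proof. destruct W_open as [_ Hi]; apply Hi. Qed.

Lemma Sig_act c p : W c -> Sig c = (Sig (Defs.act k p c) * p)%g.
Proof.
  intros Wc. have Wc' := W_act c p Wc.
  have E1 := Sig_spec c Wc. have E2 := Sig_spec _ Wc'.
  destruct Hs as [_ [_ [S3 _]]].
  have E3 : projC n k (Defs.act k p c) = Defs.act k p (projC n k c) by reflexivity.
  rewrite E3 S3 in E2; [|destruct Wc as [_ [_ Hc]]; auto].
  rewrite E1 actC_comp in E2. eapply act_inj_conf; [|apply E2].
  destruct Wc as [_ [[_ Hd] _]]; auto.
Qed.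

Definition Hm (c : Conf k) (u : R) : Conf k := Gm (Sig c) c u.

Lemma Hm_act c p u : W c -> Hm (Defs.act k p c) u = Hm c u.
Proof.
  intros Wc. rewrite /Hm (Sig_act c p Wc). apply functional_extensionality => a.
  apply functional_extensionality => j. rewrite /Gm /Defs.act permM. reflexivity.
Qed.

Lemma b0_F : inF k e b0.
Proof.
  destruct He0 as [m Hm0]. split; [|apply b0_dist].
  intro a. apply (inR_lev e (L m)); [apply HL1; auto|]. eapply inR_mono; [apply b0_inR| apply HL3; auto].
Qed.

Lemma Gm_F (sg : {perm 'I_k}) c u : inF k e c -> 0 <= u <= 1 ->
  (u < 1 -> forall a b, a <> b -> exists j, (j < n)%N /\ c (sg a) j <> c (sg b) j) ->
  inF k e (Gm sg c u).
Proof.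
  intros Fc Hu Hd. destruct (inF_level _ _ _ Fc) as [m [Hl [Fm _]]]. split.
  - intro a; apply (inR_lev e (L m)); [apply HL1; auto| apply Gm_inR; auto].
  - intros a b Hab E. destruct (Req_dec u 1) as [E1|E1].
    + subst u. apply (b0_dist a b Hab). apply functional_extensionality => j.
      have := equal_f E j. rewrite /Gm. intro E'. lra.
    + destruct (Hd ltac:(lra) a b Hab) as [j [Hj Hne]]. apply Hne.
      have := equal_f E j. rewrite /Gm /b0. have -> : (j == n) = false.
      { apply/eqP => E2; subst j; by rewrite ltnn in Hj. }
      intro E'. apply (Rmult_eq_reg_l (1 - u)); lra.
Qed.

Lemma Hm_F c u : W c -> inI u -> inF k e (Hm c u).
Proof.
  intros Wc Hu. apply Gm_F; [destruct Wc; auto| unfold inI in Hu; lra|].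
  intros _ a b Hab. have Fs : inF k (Some n) (s (projC n k c)).
  { destruct Hs as [S1 _]. apply S1. destruct Wc as [_ [_ ?]]; auto. }
  rewrite (Sig_spec c Wc) in Fs. destruct Fs as [_ Fd].
  have Hne := Fd a b Hab. rewrite /Defs.act in Hne.
  apply NNPP; intro Hno. apply Hne. apply functional_extensionality => j.
  rewrite /projC /proj. case: ltnP => Hj //. apply NNPP; intro; apply Hno; eauto.
Qed.

Lemma JC (sg : {perm 'I_k}) O m c u : openF k e O -> lev e m -> inF k (Some m) c -> 0 <= u <= 1 ->
  O (Gm sg c u) -> exists eta, 0 < eta /\ forall c'' u'', inF k (Some m) c'' -> 0 <= u'' <= 1 ->
    near_fin k m c eta c'' -> Rabs (u'' - u) < eta -> O (Gm sg c'' u'').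
Proof.
  intros HO Hl Fc Hu Oy. apply openF_iff in HO. destruct HO as [O1 O2].
  set (M := L m). have HlM : lev e M by apply HL1.
  have FyM : inF k (Some M) (Gm sg c u).
  { split; [intro a; apply Gm_inR; auto; apply Fc| apply (O1 _ Oy)]. }
  destruct (O2 M HlM _ Oy FyM) as [r0 [Hr0 P0]].
  destruct (sep_exists _ _ _ FyM) as [sy [Hsy Sy]].
  destruct (bound_exists _ _ _ Fc) as [B [HB PB]].
  set (rho := Rmin r0 (sy/2)). have Hrho : 0 < rho by apply Rmin_pos; lra.
  have Kpos : 0 < 1 + B + INR k by (pose proof (pos_INR k); lra).
  exists (rho / (1 + B + INR k)); split; [apply Rdiv_lt_0_compat; auto|].
  intros c'' u'' Fc'' Hu'' Hn Hud.
  have Est : forall a j, Rabs (Gm sg c'' u'' a j - Gm sg c u a j) < rho.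
  { intros a j. replace rho with ((rho / (1 + B + INR k)) * (1 + B + INR k)) by (field; lra).
    apply comb_est; auto; [|apply b0_bound| apply pos_INR].
    apply (near_fin_all k m c c''); auto. apply Rdiv_lt_0_compat; auto. }
  have FzM : inF k (Some M) (Gm sg c'' u'').
  { apply (inF_near k M (Gm sg c u) sy); auto.
    - intro a; apply Gm_inR; auto; apply Fc''.
    - intros a j; have := Est a j; have := Rmin_r r0 (sy/2); fold rho; lra. }
  apply P0; auto. intros i j Hj; have := Est i j; have := Rmin_l r0 (sy/2); fold rho; lra.
Qed.

Lemma tubeT (sg : {perm 'I_k}) O m c al be : openF k e O -> lev e m -> inF k (Some m) c ->
  0 <= al <= be -> be <= 1 -> (forall u, al <= u <= be -> O (Gm sg c u)) ->
  exists rho, 0 < rho /\ forall c'', inF k (Some m) c'' -> near_fin k m c rho c'' ->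
    forall u, al <= u <= be -> O (Gm sg c'' u).
Proof.
  intros HO Hl Fc Hab Hb1 HOu.
  apply (cont_ind al be (fun a => exists rho, 0 < rho /\ forall c'', inF k (Some m) c'' ->
    near_fin k m c rho c'' -> forall u, a <= u <= be -> O (Gm sg c'' u))); [lra| | |].
  - intros a a' Ha Haa' Ha' [rho [Hr P]]; exists rho; split; auto; intros c'' F N u Hu; apply P; auto; lra.
  - destruct (JC sg O m c be HO Hl Fc ltac:(lra) (HOu be ltac:(lra))) as [eta [He P]].
    exists eta; split; auto. intros c'' F N u Hu. replace u with be by lra.
    apply P; auto; [lra| rewrite Rminus_diag Rabs_R0; auto].
  - intros b Hb. destruct (JC sg O m c b HO Hl Fc ltac:(lra) (HOu b Hb)) as [eta [He P]].
    exists eta; split; auto. intros a1 a2 Ha2 Ha1 Hd1 Hd2 [r1 [Hr1 P1]].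
    exists (Rmin r1 eta); split; [apply Rmin_pos; auto|].
    intros c'' F N u Hu. destruct (Rle_dec a1 u) as [Hle|Hlt].
    + apply P1; auto; [eapply near_fin_mono; [apply N| apply Rmin_l]| lra].
    + apply P; auto; [lra| eapply near_fin_mono; [apply N| apply Rmin_r]| apply Rabs_def1; lra].
Qed.

Lemma Hm_cont : forall O, openB k e O -> forall c t, W c -> inI t -> O (Hm c t) ->
  exists V eps, openB k e V /\ V c /\ 0 < eps /\
    forall c' t', V c' -> W c' -> inI t' -> Rabs (t' - t) < eps -> O (Hm c' t').
Proof.
  intros O [HO HOi] c t Wc Ht Oc.
  set (sg := Sig c). set (q := projC n k c).
  have Fq : inF k (Some n) q by destruct Wc as [_ [? _]].
  have Uq : U q by destruct Wc as [_ [_ ?]].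
  destruct (sep_exists _ _ _ Fq) as [sq [Hsq Sq]].
  set (d := sq / 4).
  destruct Hs as [S1 [S2 [S3 S4]]].
  destruct (S4 (fun w => inF k (Some n) w /\ nearC k (s q) (Defs.act k 1%g w) d)
     (open_ball k (Some n) (s q) 1%g d) q Uq) as [V' [HV' [V'q PV']]].
  { split; [apply S1; auto| rewrite actC1; apply nearC_refl; unfold d; lra]. }
  set (X := fun w => ((V' w /\ U w) /\ (inF k (Some n) w /\ nearC k q (Defs.act k 1%g w) d))).
  have HX : openF k (Some n) X.
  { apply open_inter; [apply open_inter; [destruct HV'; auto| destruct HU; auto]| apply open_ball]. }
  set (N1 := fun c' => inF k e c' /\ inF k (Some n) (projC n k c') /\ X (projC n k c')).
  have HN1 : openF k e N1 by apply open_proj.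
  have SigN1 : forall c', N1 c' -> W c' /\ Sig c' = sg.
  { intros c' [F1 [F2 [[V'c' Uc'] [_ Nq]]]].
    have Wc' : W c' by split; [|split].
    split; auto.
    have E1 := Sig_spec c' Wc'. have E0 := Sig_spec c Wc.
    have Ns := PV' _ V'c' Uc'. destruct Ns as [_ Ns]. rewrite actC1 in Ns. rewrite actC1 in Nq.
    rewrite E1 E0 in Ns. fold q sg in Ns.
    apply/permP => a. refine (sep_core k q sq _ _ _ d d Sq (Nq (Sig c' a)) (Ns a) _). unfold d; lra. }
  destruct (inF_level _ _ _ (Hm_F c t Wc Ht)) as [_ _].
  destruct (inF_level _ _ _ (proj1 Wc)) as [m0 [Hl0 Fm0]].
  destruct (JC sg O m0 c t HO Hl0 Fm0 Ht Oc) as [eta [Heta Peta]].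
  set (eps := eta / 2).
  set (al := Rmax 0 (t - eps)). set (be := Rmin 1 (t + eps)).
  have Hal : 0 <= al <= be /\ be <= 1.
  { unfold al, be, inI in *. pose proof (Rmax_l 0 (t - eps)). pose proof (Rmin_l 1 (t+eps)).
    split; [split; [auto|]| auto]. apply Rmax_lub; apply Rmin_glb; unfold eps; lra. }
  set (N2 := fun c' => inF k e c' /\ forall u, al <= u <= be -> O (Gm sg c' u)).
  have HN2 : openF k e N2.
  { apply openF_iff; split; [intros c' [F _]; auto|].
    intros m Hl c' [F P] Fm. destruct (tubeT sg O m c' al be HO Hl Fm (proj1 Hal) (proj2 Hal) P)
      as [rho [Hr Pr]]. exists rho; split; auto. intros c'' Fm'' N. split; [eapply inF_lev; eauto|].
    apply Pr; auto. }
  have N2c : N2 c.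
  { split; [apply Wc|]. intros u Hu. apply Peta; auto.
    - unfold al, be in Hu. pose proof (Rmax_l 0 (t - eps)). pose proof (Rmin_l 1 (t+eps)). lra.
    - intros i j Hj; rewrite Rminus_diag Rabs_R0; auto.
    - unfold al, be in Hu. pose proof (Rmax_r 0 (t - eps)). pose proof (Rmin_r 1 (t+eps)).
      apply Rabs_def1; unfold eps in *; lra. }
  have N1c : N1 c.
  { split; [apply Wc| split; [auto|]]. split; [split; auto|split; auto].
    rewrite actC1; apply nearC_refl; unfold d; lra. }
  exists (fun c' => exists p, N1 (Defs.act k p c') /\ N2 (Defs.act k p c')), eps.
  split; [apply (open_sat k e (fun c0 => N1 c0 /\ N2 c0)), open_inter; auto|].
  split; [exists 1%g; rewrite actC1; auto|]. split; [unfold eps; lra|].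
  intros c' t' [p [N1c' [_ N2c']]] Wc' Ht' Htt.
  destruct (SigN1 _ N1c') as [Wp Sp].
  rewrite -(Hm_act c' p t' Wc'). rewrite /Hm Sp. apply N2c'.
  unfold al, be, inI in *. apply Rabs_def2 in Htt. split.
  - apply Rmax_lub; lra.
  - apply Rmin_glb; lra.
Qed.

Lemma W_null : incl_nullhomotopic k e e W.
Proof.
  exists Hm, b0. split; [apply b0_F|]. split; [split; [|split]|split].
  - intros c t Wc Ht; apply Hm_F; auto.
  - intros p c t Wc Ht; rewrite Hm_act; auto; apply sameB_refl.
  - apply Hm_cont.
  - intros c Wc. exists (Sig c). apply functional_extensionality => a.
    apply functional_extensionality => j. rewrite /Hm /Gm /Defs.act. ring.
  - intros c Wc. replace (Hm c R1) with b0; [apply sameB_refl|].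
    apply functional_extensionality => a. apply functional_extensionality => j.
    rewrite /Hm /Gm. ring.
Qed.

End Constr.


Lemma secat_to_catB k n r m :
  (match r with Some r' => is_true (1 <= r')%N | None => True end) ->
  secat_le k n m -> catB_le k n (tdim n r) m.
Proof.
  intros Hr [U [HU Hcov]].
  set (e := tdim n r).
  set (L := fun m0 : nat => match r with Some r' => (n + r')%N | None => maxn m0 n.+1 end).
  have HL1 : forall m0, lev e m0 -> lev e (L m0).
  { intros m0; unfold e, L; destruct r; simpl; auto. }
  have HL2 : forall m0, lev e m0 -> (m0 <= L m0)%N.
  { intros m0; unfold e, L; destruct r; simpl; [intros ->; auto| intros _; apply leq_maxl]. }
  have HL3 : forall m0, lev e m0 -> (n < L m0)%N.
  { intros m0; unfold e, L; destruct r as [r'|]; simpl; [intros _|intros _; apply leq_maxr].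
    rewrite -{1}(addn0 n) ltn_add2l; auto. }
  have He0 : exists m0, lev e m0.
  { unfold e; destruct r as [r'|]; simpl; [exists (n + r')%N; auto| exists O; auto]. }
  set (Ssec := fun i => epsilon (inhabits (fun c : Conf k => c)) (fun s => local_section k n (U i) s)).
  have HS : forall i, (i <= m)%N -> local_section k n (U i) (Ssec i).
  { intros i Hi. destruct (HU i Hi) as [_ Hex].
    apply (epsilon_spec (inhabits (fun c : Conf k => c)) (fun s => local_section k n (U i) s) Hex). }
  exists (fun i => W k n e (U i)). split.
  - intros i Hi. destruct (HU i Hi) as [HUo _]. split.
    + apply W_open; auto.
    + apply (W_null k n e (U i) (Ssec i) HUo (HS i Hi) L HL1 HL2 HL3 He0).
  - intros c Hc. destruct (Hcov c Hc) as [i [Hi Ui]]. exists i; split; auto.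
    rewrite /W (projC_id n k c Hc). split; [|split; auto].
    destruct Hc as [F1 F2]; split; auto. intro a.
    unfold e; destruct r as [r'|]; simpl.
    + eapply inR_mono; [apply F1| apply leq_addr].
    + exists n; apply F1.
Qed.

Lemma is_least_iff (P Q : nat -> Prop) m : (forall m, P m <-> Q m) -> (is_least P m <-> is_least Q m).
Proof.
  intros H; split; intros [H1 H2]; split.
  - apply H; auto.
  - intros m' Hm'; apply H2, H; auto.
  - apply H; auto.
  - intros m' Hm'; apply H2, H; auto.
Qed.

Close Scope R_scope.

Theorem theorem1 (n k : nat) (r : option nat) :
  (1 <= n)%N -> (1 <= k)%N ->
  (match r with Some r' => is_true (1 <= r')%N | None => True end) ->
  forall m : nat,
    (is_least (secat_le k n) m <-> is_least (cat_incl_le k n (tdim n r)) m) /\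
    (is_least (cat_incl_le k n (tdim n r)) m <-> is_least (catB_le k n (tdim n r)) m).
Proof.
  intros _ _ Hr m.
  have A1 : forall m, secat_le k n m -> catB_le k n (tdim n r) m.
  { intros m0; apply secat_to_catB; auto. }
  have A2 : forall m, catB_le k n (tdim n r) m -> cat_incl_le k n (tdim n r) m.
  { intros m0; apply catB_to_cat. }
  have A3 : forall m, cat_incl_le k n (tdim n r) m -> secat_le k n m.
  { intros m0; apply cat_to_secat. }
  split; apply is_least_iff; intro m0; split; auto.
Qed.
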